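(* For every integer $N\ge 0$, let $T_{1\times 3}(6,N)$ be the number of tilings of a $6\times n$ rectangle, $n=N/2$, by $N$ tiles of size $1\times 3$ (and $0$ if $N$ is odd). Then, as formal power series, \[ \sum_{N\ge 0} T_{1\times 3}(6,N)\,z^N=\frac{(1-z^6)^2(1-z^4-z^6)}{1-z^2-z^4-7z^6+z^8+5z^{10}+10z^{12}+z^{14}-3z^{16}-5z^{18}-z^{20}+z^{22}+z^{24}}. \]
   Context: A tiling of an $m\times n$ rectangle (width $m$, length $n$, made of $mn$ unit squares) by $a\times b$ tiles is a partition of the rectangle into non-overlapping axis-parallel $a\times b$ rectangles with integer corner coordinates, each placed in either of its two orientations. Tilings related by reflections or rotations of the rectangle are counted as distinct. The empty tiling counts once for $N=0$. *)

(* Defs.v *)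
From mathcomp Require Import all_boot all_order all_algebra.
Set Implicit Arguments. Unset Strict Implicit. Unset Printing Implicit Defensive.
Import GRing.Theory.

Definition cell (m n : nat) := ('I_m * 'I_n)%type.

Definition is_block (m n p q : nat) (A : {set cell m n}) : bool :=
  [exists x : 'I_m.+1, exists y : 'I_n.+1,
    [&& x + p <= m, y + q <= n &
        A == [set c : cell m n | (x <= c.1 < x + p) && (y <= c.2 < y + q)]]].

Definition is_tile (m n a b : nat) (A : {set cell m n}) : bool :=
  @is_block m n a b A || @is_block m n b a A.

Definition is_tiling (m n a b : nat) (P : {set {set cell m n}}) : bool :=
  partition P [set: cell m n] && [forall A in P, @is_tile m n a b A].

Definition num_tilings (m n a b N : nat) : nat :=
  #|[set P : {set {set cell m n}} | @is_tiling m n a b P && (#|P| == N)]|.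

Definition T13_6 (N : nat) : nat :=
  if odd N then 0 else num_tilings 6 N./2 1 3 N.

Local Open Scope ring_scope.

Definition gf_num : {poly int} :=
  (1 - 'X^6) ^+ 2 * (1 - 'X^4 - 'X^6).

Definition gf_den : {poly int} :=
  1 - 'X^2 - 'X^4 - 7%:R *: 'X^6 + 'X^8 + 5%:R *: 'X^10 + 10%:R *: 'X^12
    + 'X^14 - 3%:R *: 'X^16 - 5%:R *: 'X^18 - 'X^20 + 'X^22 + 'X^24.

(* Main.v *)
Require Import Defs.
From mathcomp Require Import all_boot all_order all_algebra zify ring.
Import GRing.Theory.
Set Implicit Arguments. Unset Strict Implicit. Unset Printing Implicit Defensive.

Section G.
Variable C : finType.
Variable S : {set {set C}}.

Definition gcount (U : {set C}) : nat :=
  #|[set P : {set {set C}} | partition P U && (P \subset S)]|.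

Lemma gcount0 : gcount set0 = 1.
Proof.
rewrite /gcount (_ : [set P | _] = [set set0]) ?cards1 //.
apply/setP => P; rewrite !inE partition_set0.
case: eqP => [->|] //=; by rewrite sub0set.
Qed.

Lemma gcount_step (U : {set C}) (c : C) : c \in U ->
  gcount U = \sum_(A | (A \in S) && (c \in A) && (A \subset U)) gcount (U :\: A).
Proof.
move=> cU.
set X := [set P : {set {set C}} | partition P U && (P \subset S)].
rewrite /gcount -/X -sum1_card.
rewrite (partition_big (fun P => pblock P c)
   (fun A => (A \in S) && (c \in A) && (A \subset U))); last first.
  move=> P; rewrite inE => /andP[pP sPS].
  have cc : c \in cover P by rewrite (cover_partition pP).
  have Pm := pblock_mem cc.
  rewrite (subsetP sPS _ Pm) mem_pblock cc /=.
  by rewrite -(cover_partition pP); apply: bigcup_max Pm _.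
apply: eq_bigr => A /andP[/andP[AS cA] AU].
rewrite sum1dep_card.
set Y := [set Q : {set {set C}} | partition Q (U :\: A) && (Q \subset S)].
have AnQ : forall Q, Q \in Y -> A \notin Q.
  move=> Q; rewrite inE => /andP[pQ _]; apply/negP => AQ.
  have := subsetP (partitionS pQ AQ) c cA; by rewrite inE cA.
rewrite (_ : [set P | _] = (fun Q => A |: Q) @: Y).
  rewrite card_in_imset //.
  move=> Q1 Q2 H1 H2 /= E.
  by rewrite -(setU1K (AnQ _ H1)) E setU1K // AnQ.
apply/setP => P; apply/idP/imsetP.
- rewrite inE => /andP[]; rewrite inE => /andP[pP sPS] /eqP pb.
  have cc : c \in cover P by rewrite (cover_partition pP).
  have AP : A \in P by rewrite -pb pblock_mem.
  exists (P :\ A); last by rewrite setD1K.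
  rewrite inE partitionD1 //=.
  by apply: subset_trans sPS; apply: subsetDl.
- move=> [Q QY ->]; have /andP[pQ sQS] : partition Q (U :\: A) && (Q \subset S) by move: QY; rewrite inE.
  have An0 : A != set0 by apply/set0Pn; exists c.
  have dis : [disjoint A & U :\: A].
    by rewrite disjoints_subset; apply/subsetP => x xA; rewrite !inE xA.
  have pU := partitionU1 pQ An0 dis.
  have E : A :|: (U :\: A) = U.
    apply/setP => x; rewrite !inE; case xA: (x \in A) => //=.
    by rewrite (subsetP AU).
  rewrite E in pU.
  rewrite inE /X inE pU /= subUset sub1set AS sQS /=.
  by rewrite (def_pblock (partition_trivIset pU) (setU11 _ _) cA).
Qed.
End G.

Lemma card_int m x p : x + p <= m -> #|[set i : 'I_m | x <= i < x + p]| = p.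
Proof.
elim: p => [|p IH] H.
  apply/eqP; rewrite cards_eq0; apply/eqP/setP => i; rewrite !inE addn0.
  by case: leqP.
have Hm : x + p < m by rewrite addnS in H.
rewrite (_ : [set i : 'I_m | _] = (Ordinal Hm) |: [set i : 'I_m | x <= i < x + p]).
  rewrite cardsU1 IH ?(ltnW Hm) // inE /= ltnn andbF //.
apply/setP => i; rewrite !inE addnS ltnS.
case: (eqVneq i (Ordinal Hm)) => [->|ne] /=; first by rewrite leq_addr leqnn.
have ne' : (val i != x + p) by apply: contra ne => /eqP E; apply/eqP/val_inj.
by rewrite [i <= _]leq_eqVlt (negbTE ne').
Qed.

Lemma card_block m n p q A : @is_block m n p q A -> #|A| = p * q.
Proof.
case/existsP => x /existsP [y /and3P[Hx Hy /eqP ->]].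
rewrite (_ : [set c : cell m n | _] =
  setX [set i : 'I_m | x <= i < x + p] [set j : 'I_n | y <= j < y + q]).
  by rewrite cardsX !card_int.
by apply/setP => c; rewrite !inE.
Qed.

Definition Stile n : {set {set cell 6 n}} := [set A | @is_tile 6 n 1 3 A].

Lemma T_eq n : num_tilings 6 n 1 3 n.*2 = gcount (Stile n) setT.
Proof.
rewrite /num_tilings /gcount; apply: eq_card => P; rewrite !inE /is_tiling.
have E : [forall A in P, @is_tile 6 n 1 3 A] = (P \subset Stile n).
  apply/forall_inP/subsetP => H A AP; first by rewrite inE H.
  by have := H A AP; rewrite inE.
rewrite E; case pP: (partition P setT) => //=; case sP: (P \subset Stile n) => //=.
have := card_partition pP.
rewrite cardsT card_prod !card_ord.
rewrite (eq_bigr (fun _ => 3)); last first.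
  move=> A AP; have := subsetP sP A AP; rewrite inE /is_tile.
  by case/orP => /card_block ->.
rewrite sum_nat_const => H; apply/eqP.
rewrite -muln2; apply/eqP; rewrite -(eqn_pmul2r (isT : 0 < 3)) -H -mulnA mulnC. done.
Qed.

Definition bit (a : seq bool) i := nth false a i.
Arguments bit : simpl never.
Definition setb (a : seq bool) i := set_nth false a i true.

Lemma bit_setb a i k : bit (setb a i) k = (k == i) || bit a k.
Proof. by rewrite /bit /setb nth_set_nth /=; case: eqP. Qed.

Fixpoint fill (h : bool) (f : nat) (a b c : seq bool) : seq (seq bool * seq bool) :=
  match f with 0 => [::] | f.+1 =>
   let i := find negb a in
   if 6 <= i then [:: (b,c)] else
   (if h && ~~ bit b i && ~~ bit c i then fill h f (setb a i) (setb b i) (setb c i) else [::]) ++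
   (if (i + 3 <= 6) && ~~ bit a i.+1 && ~~ bit a i.+2
      then fill h f (setb (setb (setb a i) i.+1) i.+2) b c else [::])
  end.

Lemma fill_false f a b c t : t \in fill false f a b c -> t = (b, c).
Proof.
elim: f a => [|f IH] a //=.
case: ifP => _; first by rewrite inE => /eqP.
case: ifP => _ //; exact: IH.
Qed.

Definition cov (j : nat) a b c (r k : nat) :=
  ((k == j) && bit a r) || ((k == j.+1) && bit b r) || ((k == j.+2) && bit c r).

Definition R n j a b c : {set cell 6 n} :=
  [set x : cell 6 n | (j <= x.2) && ~~ cov j a b c x.1 x.2].

Definition zeros a := count (fun k => ~~ bit a k) (iota 0 6).
Definition isz a := all (fun k => ~~ bit a k) (iota 0 6).

Lemma find_bit a : find negb a < 6 -> bit a (find negb a) = false.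
Proof.
case: (boolP (has negb a)) => H.
  by have := nth_find false H; rewrite /bit; case: (nth _ _ _).
by rewrite (hasNfind H) /bit nth_default.
Qed.

Lemma before_bit a k : k < find negb a -> bit a k = true.
Proof.
move=> H; have := before_find false H; rewrite /bit; by case: (nth _ _ _).
Qed.

Lemma count_lt (p q : pred nat) s i : (forall k, q k -> p k) -> p i -> ~~ q i -> i \in s ->
  count q s < count p s.
Proof.
move=> Hqp pi qi; elim: s => [|x s IH] //=; rewrite inE => /orP[/eqP <-|H].
  rewrite (negbTE qi) pi /= add0n add1n ltnS.
  by apply: sub_count => k; apply: Hqp.
have := IH H; case: (boolP (q x)) => qx; first by rewrite (Hqp _ qx).
by case: (p x) => /=; lia.
Qed.

Lemma zeros_setb a i : i < 6 -> bit a i = false -> zeros (setb a i) < zeros a.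
Proof.
move=> Hi Ha; apply: (count_lt (i := i)) => [k|||].
- by rewrite bit_setb; case: (bit a k); rewrite ?orbT.
- by rewrite Ha.
- by rewrite bit_setb eqxx.
- by rewrite mem_iota.
Qed.

Lemma zeros_setb' a i : zeros (setb a i) <= zeros a.
Proof. by apply: sub_count => k; rewrite bit_setb; case: (bit a k); rewrite ?orbT. Qed.

Section Char.
Variables (n j : nat) (a b c : seq bool).
Hypothesis Hj : j < n.
Variable i : nat.
Hypothesis Hi : i < 6.
Hypothesis Ha : bit a i = false.
Hypothesis Hbef : forall k, k < i -> bit a k = true.

Definition HA : {set cell 6 n} := [set x : cell 6 n | (i <= x.1 < i + 1) && (j <= x.2 < j + 3)].
Definition VA : {set cell 6 n} := [set x : cell 6 n | (i <= x.1 < i + 3) && (j <= x.2 < j + 1)].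
Definition hok := (j + 3 <= n) && ~~ bit b i && ~~ bit c i.
Definition vok := (i + 3 <= 6) && ~~ bit a i.+1 && ~~ bit a i.+2.
Definition c0 : cell 6 n := (Ordinal Hi, Ordinal Hj).

Lemma memR r k (Hr : r < 6) (Hk : k < n) :
  ((Ordinal Hr, Ordinal Hk) \in R n j a b c) = (j <= k) && ~~ cov j a b c r k.
Proof. by rewrite inE. Qed.

Lemma c0R : c0 \in R n j a b c.
Proof. rewrite memR /cov Ha; lia. Qed.

Lemma char A : (A \in Stile n) && (c0 \in A) && (A \subset R n j a b c) =
   (hok && (A == HA)) || (vok && (A == VA)).
Proof.
apply/idP/idP.
- case/andP => /andP[]; rewrite inE /is_tile => /orP[] /existsP[x /existsP[y /and3P[Hx Hy /eqP EA]]];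
    rewrite EA inE /= => /andP[Hc1 Hc2] /subsetP sub.
  + have Ex : (x : nat) = i by lia.
    have Ey : (y : nat) = j.
      case: (ltngtP y j) => // Hyj; last by lia.
      have Hy' : y < n by lia.
      have Hx' : x < 6 by lia.
      have := sub (Ordinal Hx', Ordinal Hy'); rewrite inE /= memR; lia.
    have Hb : bit b i = false.
      have Hk : j.+1 < n by lia.
      have := sub (Ordinal Hi, Ordinal Hk); rewrite inE /= memR /cov Ex Ey; lia.
    have Hc : bit c i = false.
      have Hk : j.+2 < n by lia.
      have := sub (Ordinal Hi, Ordinal Hk); rewrite inE /= memR /cov Ex Ey; lia.
    apply/orP; left; rewrite /hok Hb Hc -Ey; apply/andP; split; first by lia.
    by apply/eqP/setP => z; rewrite !inE Ex Ey.
  + have Ey : (y : nat) = j by lia.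
    have Ex : (x : nat) = i.
      case: (ltngtP x i) => // Hxi; last by lia.
      have Hx' : x < 6 by lia.
      have := sub (Ordinal Hx', Ordinal Hj); rewrite inE /= memR /cov (Hbef Hxi); lia.
    have H1 : bit a i.+1 = false.
      have Hk : i.+1 < 6 by lia.
      have := sub (Ordinal Hk, Ordinal Hj); rewrite inE /= memR /cov Ex Ey; lia.
    have H2 : bit a i.+2 = false.
      have Hk : i.+2 < 6 by lia.
      have := sub (Ordinal Hk, Ordinal Hj); rewrite inE /= memR /cov Ex Ey; lia.
    apply/orP; right; rewrite /vok H1 H2 -Ex; apply/andP; split; first by lia.
    by apply/eqP/setP => z; rewrite !inE Ex Ey.
- case/orP => /andP[ok /eqP ->].
  + move: ok; rewrite /hok => /andP[/andP[Hn Hb] Hc].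
    have Hi1 : i < 7 by lia.
    have Hj1 : j < n.+1 by lia.
    rewrite inE /is_tile; apply/andP; split; first (apply/andP; split).
    * apply/orP; left; apply/existsP; exists (Ordinal Hi1); apply/existsP; exists (Ordinal Hj1).
      by rewrite /= Hn eqxx andbT; lia.
    * rewrite inE /=; lia.
    * apply/subsetP => -[z1 z2]; rewrite !inE /= => /andP[H1 H2].
      have Ez : (z1 : nat) = i by lia.
      rewrite /cov Ez Ha (negbTE Hb) (negbTE Hc); lia.
  + move: ok; rewrite /vok => /andP[/andP[Hn H1] H2].
    have Hi1 : i < 7 by lia.
    have Hj1 : j < n.+1 by lia.
    rewrite inE /is_tile; apply/andP; split; first (apply/andP; split).
    * apply/orP; right; apply/existsP; exists (Ordinal Hi1); apply/existsP; exists (Ordinal Hj1).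
      by rewrite /= Hn eqxx andbT; lia.
    * rewrite inE /=; lia.
    * apply/subsetP => -[z1 z2]; rewrite !inE /= => /andP[E1 E2].
      have Ez : (z2 : nat) = j by lia.
      have : (z1 == i :> nat) || (z1 == i.+1 :> nat) || (z1 == i.+2 :> nat) by lia.
      rewrite /cov Ez; case/orP => [/orP[]|] /eqP ->; rewrite ?Ha ?(negbTE H1) ?(negbTE H2); lia.
Qed.
End Char.

Section Char2.
Variables (n j : nat) (a b c : seq bool).
Hypothesis Hj : j < n.
Variable i : nat.
Hypothesis Hi : i < 6.

Lemma RHA : R n j a b c :\: HA n j i = R n j (setb a i) (setb b i) (setb c i).
Proof.
apply/setP => -[z1 z2]; rewrite !inE /= /cov !bit_setb.
case: (eqVneq (z1 : nat) i) => [E|E]; rewrite ?E ?eqxx /=; last first.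
  have E' : (i <= z1 < i + 1) = false by lia.
  by rewrite E'.
apply/idP/idP; lia.
Qed.

Lemma RVA : R n j a b c :\: VA n j i = R n j (setb (setb (setb a i) i.+1) i.+2) b c.
Proof.
apply/setP => -[z1 z2]; rewrite !inE /= /cov !bit_setb.
case: (ltnP (z1 : nat) i) => H1.
  have E1 : (z1 == i :> nat) = false by lia.
  have E2 : (z1 == i.+1 :> nat) = false by lia.
  have E3 : (z1 == i.+2 :> nat) = false by lia.
  have E' : (i <= z1 < i + 3) = false by lia.
  rewrite E1 E2 E3 /=; apply/idP/idP; lia.
case: (ltnP (z1 : nat) (i + 3)) => H2.
  have : (z1 == i :> nat) || (z1 == i.+1 :> nat) || (z1 == i.+2 :> nat) by lia.
  case/orP => [/orP[]|] /eqP ->; rewrite ?eqxx /= ?orbT; apply/idP/idP; lia.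
have E1 : (z1 == i :> nat) = false by lia.
have E2 : (z1 == i.+1 :> nat) = false by lia.
have E3 : (z1 == i.+2 :> nat) = false by lia.
have E' : (i <= z1 < i + 3) = false by lia.
rewrite E1 E2 E3 /=; apply/idP/idP; lia.
Qed.

Lemma HAneVA : i.+2 < 6 -> HA n j i != VA n j i.
Proof.
move=> H; have Hk : i.+1 < 6 by lia.
apply/negP => /eqP E.
have := in_set (fun x : cell 6 n => (i <= x.1 < i + 1) && (j <= x.2 < j + 3)) (Ordinal Hk, Ordinal Hj).
rewrite -/(HA n j i) E inE /=; lia.
Qed.
End Char2.

Lemma Rfull n j a b c : (forall k, k < 6 -> bit a k) -> R n j a b c = R n j.+1 b c [::].
Proof.
move=> H; apply/setP => -[z1 z2]; rewrite !inE /= /cov.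
have Hz := H z1 (ltn_ord z1).
have E0 : bit [::] z1 = false by rewrite /bit nth_nil.
rewrite E0 Hz; apply/idP/idP; lia.
Qed.

Lemma sum2 (T : finType) (x y : T) (b1 b2 : bool) (F : T -> nat) : (b1 -> b2 -> x != y) ->
 \sum_(A | (b1 && (A == x)) || (b2 && (A == y))) F A =
   (if b1 then F x else 0) + (if b2 then F y else 0).
Proof.
case: b1; case: b2 => /= H.
- rewrite (bigD1 x) ?eqxx //= (eq_bigl (fun A => A == y)) ?big_pred1_eq //.
  move=> A; case: (eqVneq A x) => [->|] /=; first by rewrite (negbTE (H isT isT)).
  by rewrite andbT.
- by rewrite (eq_bigl (fun A => A == x)) ?big_pred1_eq ?addn0 // => A; rewrite orbF.
- by rewrite big_pred1_eq.
- by rewrite big_pred0.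
Qed.

Lemma B2 n j (Hj : j < n) f : forall a b c, zeros a < f ->
 gcount (Stile n) (R n j a b c) =
 sumn (map (fun t => gcount (Stile n) (R n j.+1 t.1 t.2 [::])) (fill (j + 3 <= n) f a b c)).
Proof.
elim: f => [|f IH] a b c Hz //.
rewrite /=; set i := find negb a.
case: ifP => Hi6.
  rewrite (@Rfull n j a b c (fun k Hk => before_bit (leq_trans Hk Hi6))) /=.
  by rewrite addn0.
have Hi : i < 6 by lia.
have Ha : bit a i = false by apply: find_bit.
have Hbef : forall k, k < i -> bit a k = true by move=> k; apply: before_bit.
rewrite (gcount_step _ (c0R b c Hj Hi Ha)).
rewrite (eq_bigl _ _ (char b c Hj Hi Ha Hbef)).
rewrite sum2; last first.
  by move=> _ /andP[/andP[H _] _]; apply: HAneVA; lia.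
rewrite map_cat sumn_cat /hok /vok; congr (_ + _).
  case: ifP => _ //; rewrite RHA //; apply: IH.
  have := zeros_setb Hi Ha; lia.
case: ifP => _ //; rewrite RVA //; apply: IH.
have := zeros_setb Hi Ha.
have := zeros_setb' (setb a i) i.+1.
have := zeros_setb' (setb (setb a i) i.+1) i.+2.
lia.
Qed.

Fixpoint v (m : nat) (s : seq bool * seq bool) : nat :=
  match m with
  | 0 => isz s.1 && isz s.2
  | m'.+1 => sumn (map (v m') (fill (2 < m) 7 s.1 s.2 [::]))
  end.

Lemma vS m s : v m.+1 s = sumn (map (v m) (fill (2 < m.+1) 7 s.1 s.2 [::])).
Proof. by []. Qed.
Arguments v : simpl never.
Arguments fill : simpl never.

Lemma zeros_le a : zeros a < 7.
Proof. rewrite /zeros; have := count_size (fun k => ~~ bit a k) (iota 0 6); rewrite size_iota; lia. Qed.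

Lemma B1 n m : forall j a b, j + m = n -> (m = 0 -> isz a) -> (m <= 1 -> isz b) ->
  gcount (Stile n) (R n j a b [::]) = v m (a, b).
Proof.
elim: m => [|m IH] j a b Hjm Ha Hb.
  rewrite /v Ha // Hb // (_ : R n j a b [::] = set0) ?gcount0 //.
  apply/setP => -[z1 z2]; rewrite !inE /=; have := ltn_ord z2; lia.
have Hj : j < n by lia.
rewrite (B2 Hj b [::] (zeros_le a)) vS.
have -> : (2 < m.+1) = (j + 3 <= n) by lia.
congr sumn; apply/eq_in_map => -[t1 t2] Ht /=.
apply: IH; first by lia.
- move=> m0; move: Ht; have -> : (j + 3 <= n) = false by lia.
  move/fill_false => [-> _]; apply: Hb; lia.
- move=> m1; move: Ht; have -> : (j + 3 <= n) = false by lia.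
  by move/fill_false => [_ ->].
Qed.

Lemma count_v n : gcount (Stile n) setT = v n ([::], [::]).
Proof.
rewrite -(@B1 n n 0) //.
congr gcount; apply/setP => -[z1 z2]; rewrite !inE /= /cov /bit !nth_nil.
by rewrite !andbF.
Qed.

Local Open Scope ring_scope.

Definition st := (seq bool * seq bool)%type.
Definition lc := seq (st * int).

Definition ev (l : lc) (F : st -> int) : int := foldr (fun p acc => p.2 * F p.1 + acc) 0 l.

Definition back (l : lc) : lc :=
  flatten (map (fun p => map (fun t => (t, p.2)) (fill true 7 p.1.1 p.1.2 [::])) l).

Definition stepF (F : st -> int) (s : st) : int :=
  foldr (fun t acc => F t + acc) 0 (fill true 7 s.1 s.2 [::]).

Lemma stepF_ext F G s : (forall t, F t = G t) -> stepF F s = stepF G s.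
Proof. by move=> H; rewrite /stepF; elim: (fill _ _ _ _ _) => [|t ts IH] //=; rewrite IH H. Qed.

Lemma ev_cat l1 l2 F : ev (l1 ++ l2) F = ev l1 F + ev l2 F.
Proof. by elim: l1 => [|p l IH] /=; rewrite ?add0r // IH addrA. Qed.

Lemma ev_back l F : ev (back l) F = ev l (stepF F).
Proof.
elim: l => [|[s c] l IH] //=; rewrite /back /= ev_cat -/(back l) IH; congr (_ + _).
rewrite /stepF; elim: (fill _ _ _ _ _) => [|t ts IHt] /=; first by rewrite mulr0.
by rewrite IHt mulrDr.
Qed.

Lemma ev_ext l F G : (forall s, F s = G s) -> ev l F = ev l G.
Proof. by move=> H; elim: l => [|p l IH] //=; rewrite IH H. Qed.

Fixpoint ins (p : st * int) (l : lc) : lc :=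
  match l with
  | [::] => [:: p]
  | q :: r => if q.1 == p.1 then (q.1, q.2 + p.2) :: r else q :: ins p r
  end.

Lemma ev_ins p l F : ev (ins p l) F = p.2 * F p.1 + ev l F.
Proof.
elim: l => [|q r IH] //=; case: eqP => [E|_] /=.
  by rewrite E mulrDl addrA [_ * _ + _]addrC.
by rewrite IH addrCA.
Qed.

Definition merge (l : lc) : lc := foldr ins [::] l.

Lemma ev_merge l F : ev (merge l) F = ev l F.
Proof. by elim: l => [|p l IH] //=; rewrite ev_ins IH. Qed.

Definition lam (k : nat) : lc := iter k (fun l => merge (back l)) [:: (([::],[::]), 1)].

Lemma v_step m s : (2 < m)%N -> ((v m s)%:R : int) = stepF (fun t => (v m.-1 t)%:R) s.
Proof.
case: m => // m Hm; rewrite vS /stepF Hm /=.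
by elim: (fill _ _ _ _ _) => [|t ts IH] //=; rewrite natrD IH.
Qed.

Lemma lam_v k m : (k + 2 <= m)%N ->
  ((v m ([::],[::]))%:R : int) = ev (lam k) (fun s => (v (m - k) s)%:R).
Proof.
elim: k => [|k IH] H.
  by rewrite /= subn0 mul1r addr0.
rewrite IH; last by lia.
rewrite /lam iterS -/(lam k) ev_merge ev_back; apply: ev_ext => s.
rewrite v_step; last by lia.
apply: stepF_ext => t; congr (_%:R); congr v; lia.
Qed.


Definition denl : seq int := [:: 1; 0; -1; 0; -1; 0; -7; 0; 1; 0; 5; 0; 10; 0; 1; 0; -3; 0; -5; 0; -1; 0; 1; 0; 1].
Definition numl : seq int := [:: 1; 0; 0; 0; -1; 0; -3; 0; 0; 0; 2; 0; 3; 0; 0; 0; -1; 0; -1].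

Definition lamN (k : nat) : lc := if odd k then [::] else lam (12 - k./2).
Definition comb : lc :=
  flatten (map (fun k => map (fun p => (p.1, nth 0 denl k * p.2)) (lamN k)) (iota 0 25)).

Lemma comb_zero : all (fun p => p.2 == 0) (merge comb).
Proof. by vm_compute. Qed.

Lemma ev_zero l F : all (fun p => p.2 == 0) l -> ev l F = 0.
Proof. by elim: l => [|p l IH] //= /andP[/eqP -> H]; rewrite IH // mul0r addr0. Qed.

Lemma ev_comb (s : seq nat) (c : nat -> int) (L : nat -> lc) G :
  ev (flatten (map (fun k => map (fun p => (p.1, c k * p.2)) (L k)) s)) G =
  \sum_(k <- s) c k * ev (L k) G.
Proof.
elim: s => [|k s IH]; first by rewrite big_nil.
rewrite big_cons /= ev_cat IH; congr (_ + _).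
elim: (L k) => [|p l IHl] /=; first by rewrite mulr0.
by rewrite IHl mulrDr mulrA.
Qed.

Definition Tf (M : nat) : int := if odd M then 0 else (v M./2 ([::],[::]))%:R.

Lemma rec_even n : (14 <= n)%N -> \sum_(k <- iota 0 25) nth 0 denl k * Tf (n.*2 - k) = 0.
Proof.
move=> Hn.
set G := fun s => ((v (n - 12) s)%:R : int).
rewrite (eq_big_seq (fun k => nth 0 denl k * ev (lamN k) G)); last first.
  move=> k; rewrite mem_iota add0n => Hk; congr (_ * _).
  rewrite /Tf /lamN oddB; last by rewrite -addnn; lia.
  rewrite odd_double /=; case: ifP => Ok //.
  have Ek : k = (k./2).*2 by rewrite -[in LHS](odd_double_half k) Ok.
  move: Hk; rewrite Ek; move: (k./2) => k' Hk.
  rewrite -doubleB !doubleK.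
  have Hk' : (k' <= 12)%N by move: Hk; rewrite -addnn; lia.
  rewrite (@lam_v (12 - k') (n - k')); last by lia.
  apply: ev_ext => s; rewrite /G; congr (_%:R); congr v; lia.
by rewrite -ev_comb -/comb -(ev_merge comb) (ev_zero _ comb_zero).
Qed.

Local Open Scope ring_scope.

Lemma den_coef k : gf_den`_k = nth 0 denl k.
Proof.
rewrite /gf_den !coefD !coefN !coefZ !coefXn coef1.
do 25 (case: k => [|k]; first by vm_compute).
by rewrite /= nth_nil !mulr0 !subr0 ?addr0.
Qed.

Lemma num_eq : gf_num = 1 - 'X^4 - 'X^6 *+ 3 + 'X^10 *+ 2 + 'X^12 *+ 3 - 'X^16 - 'X^18 :> {poly int}.
Proof. rewrite /gf_num. ring. Qed.

Lemma num_coef k : gf_num`_k = nth 0 numl k.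
Proof.
rewrite num_eq !coefD !coefN !coefMn !coefXn coef1.
do 19 (case: k => [|k]; first by vm_compute).
by rewrite /= nth_nil mul0rn !addr0 ?subr0.
Qed.

Local Open Scope ring_scope.

Lemma T13_Tf N : ((T13_6 N)%:R : int) = Tf N.
Proof.
rewrite /T13_6 /Tf; case: ifP => Ho //.
have E : (N./2).*2 = N by rewrite -[in RHS](odd_double_half N) Ho.
have -> : num_tilings 6 N./2 1 3 N = num_tilings 6 N./2 1 3 (N./2).*2 by rewrite E.
by rewrite T_eq count_v.
Qed.

Lemma bigfoldr (s : seq nat) (h : nat -> int) :
  \sum_(k <- s) h k = foldr (fun k acc => h k + acc) 0 s.
Proof. by elim: s => [|x s IH]; rewrite ?big_nil ?big_cons ?IH. Qed.

Definition small_check : bool :=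
  all (fun N => foldr (fun k acc => nth 0 denl k * Tf (N - k) + acc) 0 (iota 0 N.+1)
                == nth 0 numl N) (iota 0 28).

Lemma small_ok : small_check.
Proof. by vm_compute. Qed.

Lemma den_odd : all (fun k => odd k ==> (nth 0 denl k == 0)) (iota 0 25).
Proof. by vm_compute. Qed.

Unset Implicit Arguments.
Theorem mainTheorem3 :
  forall N : nat,
    \sum_(k < N.+1) gf_den`_k * ((T13_6 (N - k)%N)%:R : int) = gf_num`_N.
Proof.
move=> N.
rewrite (eq_bigr (fun k : 'I_N.+1 => nth 0 denl k * Tf (N - k))); last first.
  by move=> k _; rewrite den_coef T13_Tf.
rewrite num_coef -(big_mkord xpredT (fun k => nth 0 denl k * Tf (N - k))).
rewrite /index_iota subn0.
case: (ltnP N 28) => HN.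
  rewrite bigfoldr; apply/eqP.
  by have := allP small_ok N; rewrite mem_iota add0n; apply.
have -> : N.+1 = (25 + (N.+1 - 25))%N by lia.
rewrite iotaD big_cat; set s0 := iota 0 25; rewrite /= [X in _ + X]big1_seq; last first.
  move=> k /andP[_]; rewrite mem_iota => Hk.
  rewrite nth_default ?mul0r // (_ : size denl = 25%N) //; lia.
rewrite addr0 nth_default; last by rewrite (_ : size numl = 19%N) //; lia.
case: (boolP (odd N)) => Ho.
  rewrite big1_seq // => k /andP[_ Hk].
  have := allP den_odd k Hk; rewrite /s0 mem_iota add0n in Hk.
  case: (boolP (odd k)) => Ok /=; first by move/eqP ->; rewrite mul0r.
  move=> _; rewrite /Tf oddB; last by lia.
  by rewrite Ho (negbTE Ok) mulr0.
have E : (N./2).*2 = N by rewrite -[in RHS](odd_double_half N) (negbTE Ho).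
rewrite -E; apply: rec_even.
move: HN; rewrite -E -addnn; lia.
Qed.
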